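(* Let $B=\mathrm{GF}(p^m)$ and $F=\mathrm{GF}(p^{mt})$ and assume $t$ is divisible by $p$. Let $\alpha^*\neq\overline{\alpha}$ be elements of $F$, and let $K_{\alpha^*,\overline{\alpha}}=\{z\in F:\mathrm{Tr}_{F/B}(z(\overline{\alpha}-\alpha^* ))=0\}$. Let $\{u_1,\dots,u_{t-1}\}$ and $\{v_1,\dots,v_{t-1}\}$ be two bases of $K_{\alpha^*,\overline{\alpha}}$ over $B$, completed to bases $\{u_1,\dots,u_t\}$ and $\{v_1,\dots,v_t\}$ of $F$ over $B$. For $i\in[t]$ set $p_i(x)=\dfrac{\mathrm{Tr}_{F/B}(u_i(x-\alpha^* ))}{x-\alpha^*}$ and $q_i(x)=\dfrac{\mathrm{Tr}_{F/B}(v_i(x-\overline{\alpha}))}{x-\overline{\alpha}}$. Let $f\in F[x]$. Then $\mathrm{Tr}_{F/B}\big(p_t(\overline{\alpha})f(\overline{\alpha})\big)$ is a $B$-linear combination of the traces $\mathrm{Tr}_{F/B}\big(q_i(\overline{\alpha})f(\overline{\alpha})\big)$, $i\in[t-1]$, and $\mathrm{Tr}_{F/B}\big(q_t(\alpha^* )f(\alpha^* )\big)$ is a $B$-linear combination of the traces $\mathrm{Tr}_{F/B}\big(p_i(\alpha^* )f(\alpha^* )\big)$, $i\in[t-1]$.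
   Context: $\mathrm{Tr}_{F/B}(x)=\sum_{i=0}^{t-1}x^{|B|^i}$ is the field trace; $[t]=\{1,\dots,t\}$. *)

(* Defs.v *)
From HB Require Import structures.
From mathcomp Require Import all_boot all_order all_algebra all_field.
Set Implicit Arguments. Unset Strict Implicit. Unset Printing Implicit Defensive.
Import GRing.Theory.
Local Open Scope ring_scope.

Definition trFB (Bf : finFieldType) (L : fieldExtType Bf) (t : nat) (x : L) : L :=
  \sum_(i < t) x ^+ (#|Bf| ^ i).

(* The polynomial  Tr_{F/B}(u (x - a)) / (x - a)  in F[x]
   (exact polynomial quotient). *)
Definition trpoly (Bf : finFieldType) (L : fieldExtType Bf) (t : nat) (u a : L)
  : {poly L} :=
  (\sum_(j < t) ((u%:P * ('X - a%:P)) ^+ (#|Bf| ^ j))) %/ ('X - a%:P).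

(* Main.v *)
Require Import Defs.
From HB Require Import structures.
From mathcomp Require Import all_boot all_order all_algebra all_field.
Import GRing.Theory.
Local Open Scope ring_scope.
Set Implicit Arguments. Unset Strict Implicit.

Lemma expq_fix (Bf : finFieldType) (c : Bf) i : c ^+ (#|Bf| ^ i)%N = c.
Proof.
elim: i => [|i IH]; first by rewrite expn0 expr1.
by rewrite expnS exprM expf_card.
Qed.

Lemma trD (Bf : finFieldType) (L : fieldExtType Bf) t
  (hn : forall i, [pchar L].-nat (#|Bf| ^ i)%N) (x y : L) :
  trFB t (x + y) = trFB t x + trFB t y.
Proof. by rewrite /trFB -big_split; apply: eq_bigr => i _; apply: exprDn_pchar. Qed.

Lemma tr0 (Bf : finFieldType) (L : fieldExtType Bf) t : trFB t (0 : L) = 0.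
Proof.
rewrite /trFB big1 // => i _.
have q0 : (0 < #|Bf|)%N by apply: ltnW; apply: finNzRing_gt1.
by rewrite expr0n eqn0Ngt expn_gt0 q0.
Qed.

Lemma trN (Bf : finFieldType) (L : fieldExtType Bf) t
  (hn : forall i, [pchar L].-nat (#|Bf| ^ i)%N) (x : L) :
  trFB t (- x) = - trFB t x.
Proof. by apply/eqP; rewrite -addr_eq0 -trD // addNr tr0. Qed.

Lemma trZ (Bf : finFieldType) (L : fieldExtType Bf) t (c : Bf) (x : L) :
  trFB t (c *: x) = c *: trFB t x.
Proof.
rewrite /trFB scaler_sumr; apply: eq_bigr => i _.
by rewrite exprZn expq_fix.
Qed.

Lemma trSum (Bf : finFieldType) (L : fieldExtType Bf) t
  (hn : forall i, [pchar L].-nat (#|Bf| ^ i)%N) n (F : 'I_n -> L) :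
  trFB t (\sum_(i < n) F i) = \sum_(i < n) trFB t (F i).
Proof.
exact: (big_morph (@trFB Bf L t) (@trD Bf L t hn) (@tr0 Bf L t)).
Qed.

Lemma fermat_full (Bf : finFieldType) (L : fieldExtType Bf) t
  (dimL : \dim {:L} = t) (x : L) : x ^+ (#|Bf| ^ t)%N = x.
Proof.
have := Fermat's_little_theorem (aspacef L) x.
by rewrite memvf dimL => /esym/eqP.
Qed.


Lemma tr_fix (Bf : finFieldType) (L : fieldExtType Bf) t
  (hn : forall i, [pchar L].-nat (#|Bf| ^ i)%N)
  (dimL : \dim {:L} = t) (x : L) : (trFB t x) ^+ #|Bf| = trFB t x.
Proof.
have hq : [pchar L].-nat #|Bf| by have := hn 1%N; rewrite expn1.
have q0 : (0 < #|Bf|)%N by apply: ltnW; apply: finNzRing_gt1.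
have z : (0 : L) ^+ #|Bf| = 0 by rewrite expr0n eqn0Ngt q0.
rewrite /trFB (big_morph (fun y : L => y ^+ #|Bf|) (fun a b => exprDn_pchar a b hq) z).
  case: t dimL => [|t] dimL; first by rewrite !big_ord0.
  rewrite big_ord_recr big_ord_recl /= expn0 expr1 -exprM -expnSr.
  rewrite (fermat_full dimL) addrC; congr (_ + _).
  by apply: eq_bigr => i _; rewrite -exprM -expnSr.
Qed.

Lemma tr_of_fixed (Bf : finFieldType) (L : fieldExtType Bf) t (y : L) :
  y ^+ #|Bf| = y -> trFB t y = y *+ t.
Proof.
move=> hy; rewrite /trFB (eq_bigr (fun _ => y)) ?sumr_const ?card_ord //.
move=> i _; elim: (nat_of_ord i) => [|k IH]; first by rewrite expn0 expr1.
by rewrite expnSr exprM IH hy.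
Qed.

Lemma S_eval (Bf : finFieldType) (L : fieldExtType Bf) t (u a x : L) :
  (\sum_(j < t) ((u%:P * ('X - a%:P)) ^+ (#|Bf| ^ j)%N)).[x] = trFB t (u * (x - a)).
Proof.
rewrite horner_sum /trFB; apply: eq_bigr => j _.
by rewrite horner_exp hornerM hornerC hornerXsubC.
Qed.

Lemma S_dvd (Bf : finFieldType) (L : fieldExtType Bf) t (u a : L) :
  ('X - a%:P) %| (\sum_(j < t) ((u%:P * ('X - a%:P)) ^+ (#|Bf| ^ j)%N)).
Proof. by rewrite dvdp_XsubCl /root S_eval subrr mulr0 tr0. Qed.

Lemma trpoly_eval (Bf : finFieldType) (L : fieldExtType Bf) t (u a x : L) :
  x != a -> (trpoly t u a).[x] = trFB t (u * (x - a)) / (x - a).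
Proof.
move=> hxa; rewrite -S_eval -(divpK (S_dvd t u a)) hornerM hornerXsubC mulfK //.
by rewrite subr_eq0.
Qed.

Lemma trpoly_root (Bf : finFieldType) (L : fieldExtType Bf) t (u a : L)
  (hq0 : (#|Bf|%:R : L) = 0) : (0 < t)%N -> (trpoly t u a).[a] = u.
Proof.
move=> t0.
have := congr1 (fun P => (deriv P).[a]) (divpK (S_dvd t u a)).
rewrite /= derivM derivXsubC hornerD !hornerM hornerXsubC subrr mulr0 add0r.
rewrite -[1]/(1%:P) hornerC mulr1.
rewrite /trpoly => ->.
rewrite raddf_sum horner_sum.
case: t t0 => // t _; rewrite big_ord_recl /= big1 ?addr0.
  rewrite expn0 deriv_exp /= hornerMn hornerM horner_exp expr0 mulr1.
  by rewrite derivM derivC derivXsubC mul0r add0r mulr1 hornerC.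
move=> i _; rewrite deriv_exp hornerMn -mulr_natr natrX hq0 expr0n /=.
by rewrite mulr0.
Qed.

Lemma span_comb (Bf : finFieldType) (L : fieldExtType Bf) t
  (hn : forall i, [pchar L].-nat (#|Bf| ^ i)%N) n (s : seq L) (w y : L) :
  size s = n -> w \in <<s>>%VS ->
  exists c : 'I_n -> Bf, trFB t (w * y) = \sum_(i < n) c i *: trFB t (s`_i * y).
Proof.
move=> hs; subst n => hw.
have hw' := @coord_span _ _ _ (in_tuple s) w hw.
exists (fun i => coord (in_tuple s) i w).
rewrite {1}hw' mulr_suml trSum //; apply: eq_bigr => i _.
by rewrite -scalerAl trZ.
Qed.

Theorem corollary2 (p m t : nat) (Bf : finFieldType) (L : fieldExtType Bf)
  (p_prime : prime p) (cardB : #|Bf| = (p ^ m)%N) (dimL : \dim {:L} = t)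
  (p_dvd_t : (p %| t)%N)
  (astar abar : L) (hne : astar != abar)
  (u v : seq L) (size_u : size u = t) (size_v : size v = t)
  (u_basisK_free : free (take t.-1 u))
  (u_basisK_span : forall z : L,
      (z \in <<take t.-1 u>>%VS) = (trFB t (z * (abar - astar)) == 0))
  (v_basisK_free : free (take t.-1 v))
  (v_basisK_span : forall z : L,
      (z \in <<take t.-1 v>>%VS) = (trFB t (z * (abar - astar)) == 0))
  (u_basis : basis_of fullv u) (v_basis : basis_of fullv v)
  (f : {poly L}) :
  (exists c : 'I_t.-1 -> Bf,
      trFB t ((trpoly t (nth 0 u t.-1) astar).[abar] * f.[abar])
      = \sum_(i < t.-1) c i *: trFB t ((trpoly t (nth 0 v i) abar).[abar] * f.[abar]))
  /\
  (exists c : 'I_t.-1 -> Bf,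
      trFB t ((trpoly t (nth 0 v t.-1) abar).[astar] * f.[astar])
      = \sum_(i < t.-1) c i *: trFB t ((trpoly t (nth 0 u i) astar).[astar] * f.[astar])).
Proof.
have [t0|tpos] := posnP t.
  by split; exists (fun _ => 0); rewrite big1 => [|i _]; rewrite ?scale0r // /trFB t0 big_ord0.
have hpB : p \in [pchar Bf] := card_finPcharP cardB p_prime.
have hpL : p \in [pchar L] by rewrite (pchar_lalg L).
have hn : forall i, [pchar L].-nat (#|Bf| ^ i)%N.
  move=> i; rewrite (eq_pnat _ (pcharf_eq hpL)) cardB -expnM pnatX pnat_id //.
have m0 : (0 < m)%N by move: (finNzRing_gt1 Bf); rewrite cardB; case: (m) => //; rewrite expn0.
have hq0 : (#|Bf|%:R : L) = 0.
  by rewrite cardB natrX (pcharf0 hpL) expr0n eqn0Ngt m0.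
have ht0 : (t%:R : L) = 0 by apply/eqP; rewrite -(dvdn_pcharf hpL).
have key : forall z : L, trFB t (trFB t z) = 0.
  by move=> z; rewrite (tr_of_fixed t (tr_fix hn dimL z)) -mulr_natr ht0 mulr0.
have hba : abar - astar != 0 by rewrite subr_eq0 eq_sym.
have hab : astar - abar != 0 by rewrite subr_eq0.
have hsv : size (take t.-1 v) = t.-1 by rewrite size_takel // size_v leq_pred.
have hsu : size (take t.-1 u) = t.-1 by rewrite size_takel // size_u leq_pred.
split.
  have hw : trFB t (nth 0 u t.-1 * (abar - astar)) / (abar - astar)
      \in <<take t.-1 v>>%VS.
    by rewrite v_basisK_span divfK // key.
  have [c hc] := @span_comb Bf L t hn t.-1 (take t.-1 v) _ f.[abar] hsv hw.
  exists c; rewrite trpoly_eval 1?eq_sym // hc; apply: eq_bigr => i _.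
  by rewrite nth_take // trpoly_root.
have hw : trFB t (nth 0 v t.-1 * (astar - abar)) / (astar - abar)
    \in <<take t.-1 u>>%VS.
  by rewrite u_basisK_span -[abar - astar]opprB mulrN divfK // trN // key oppr0.
have [c hc] := @span_comb Bf L t hn t.-1 (take t.-1 u) _ f.[astar] hsu hw.
exists c; rewrite trpoly_eval // hc; apply: eq_bigr => i _.
by rewrite nth_take // trpoly_root.
Qed.
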